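(* Consider computing $\mathbf{r}=\mathbf{s}\mathbf{A}$ over $\mathbb{F}_2$ ($\mathbf A$ an $L\times K$ binary matrix) with AND, XOR and majority gates from Gate Model II with fan-in bound $D>3$ and defective fractions $\alpha_{\text{and}},\alpha_{\text{xor}},\alpha_{\text{maj}}$ respectively, using the ENCODED-F scheme with group size $d_s\le D$ and a $(d_v,d_c)$-regular LDPC code (length $N$, dimension $K$, $P=N-K$ parity checks, rate $R=\frac{N-P}{N}$, $d_c\le D$) that satisfies (A.3) with constants $\alpha_0,\theta\in(0,1)$. If $$(d_s-1)\alpha_{\text{and}}+[D(1-R)+1]\alpha_{\text{xor}}+\alpha_{\text{maj}}<\theta\alpha_0,$$ then $\mathbf r=\mathbf s\mathbf A$ can be computed using $N$ AND gates, $N+P$ XOR gates and $N$ majority gates, with at most $\frac{2N+P}{K}\lceil\frac{L}{d_s-1}\rceil+\frac{NL}{K}=\Theta(\frac{LN}{K})$ operations per output bit, and, for every input $\mathbf s$ and every placement of defective gates consistent with the fractions above, the error fraction of the final output is at most $\alpha_0$.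
   Context: Gate Model II: among a set of $n$ gates of a given type, each is either perfect, always outputting $g(u_1,\dots,u_{d_g})$ with $d_g\le D$, or defective, always outputting $f(g(u_1,\dots,u_{d_g}))$ for a fixed $f$ which is NOT, constant $0$, or constant $1$; the fraction of defective gates of type $i$ is $\alpha_i$; which gates are defective is unknown (worst case). Registers and wires are noiseless. Operations per output bit = total number of gate activations divided by $K$. Condition (A.3): for every pattern of at most $\alpha_0N$ erroneous bits in a word, one noiseless iteration of the parallel bit flipping (PBF) algorithm leaves at most $(1-\theta)\alpha_0N$ erroneous bits. One PBF iteration: compute all parity checks; flip each variable bit connected to more than $d_v/2$ unsatisfied checks; set each variable bit connected to exactly $d_v/2$ unsatisfied checks to a uniformly random bit. ENCODED-F: let $\mathbf G$ be a systematic $K\times N$ generator matrix of the code and precompute noiselessly $\tilde{\mathbf G}=\mathbf A\mathbf G$ with rows $\tilde{\mathbf g}_1,\dots,\tilde{\mathbf g}_L$. An $N$-bit register starts at zero. In stage $l=1,\dots,\lceil L/(d_s-1)\rceil$: compute $s_i\tilde{\mathbf g}_i$ for the $d_s-1$ indices $i\in\{(d_s-1)(l-1)+1,\dots,(d_s-1)l\}$ with AND gates, add them to the register with $N$ XOR gates (fan-in $d_s$), then perform one iteration of PBF decoding on the register using $P$ XOR gates (fan-in $d_c$, computing the parity checks) and $N$ majority gates (fan-in $d_v$, deciding flips). The final register contents are the output, compared with the correct codeword $\mathbf s\tilde{\mathbf G}=\mathbf r\mathbf G$; the error fraction is the fraction of its $N$ bits that are wrong. *)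

(* Defs.v *)
From HB Require Import structures.
From mathcomp Require Import all_boot all_order all_algebra.
Set Implicit Arguments. Unset Strict Implicit. Unset Printing Implicit Defensive.
Import Order.TTheory GRing.Theory Num.Theory.
Local Open Scope ring_scope.

Notation F2 := 'F_2.

Definition valid_defect (f : F2 -> F2) : Prop :=
  f = (fun x => x + 1) \/ f = (fun _ => 0) \/ f = (fun _ => 1).

Definition gate_out (T : finType) (Def : {set T}) (f : F2 -> F2) (g : T) (v : F2) : F2 :=
  if g \in Def then f v else v.

(* Majority gate of fan-in dv fed with u ones (u = number of unsatisfied checks):
   decides "flip" (1) if more than dv/2 inputs are 1, "no flip" (0) if fewer,
   and outputs the tie-break bit r on ties.  New bit = old bit + decision, so
   on ties the new bit is old + r (a uniformly random bit when r is). *)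
Definition maj_dec (dv u : nat) (r : F2) : F2 :=
  if (dv < u.*2)%N then 1 else if u.*2 == dv then r else 0.

Definition adj (P N : nat) (H : 'M[F2]_(P, N)) (c : 'I_P) (v : 'I_N) : bool := H c v != 0.

Definition check_val (P N : nat) (H : 'M[F2]_(P, N)) (Dchk : {set 'I_P}) (fx : F2 -> F2)
  (x : 'rV[F2]_N) (c : 'I_P) : F2 :=
  gate_out Dchk fx c (\sum_(v : 'I_N | adj H c v) x 0 v).

Definition pbf_step (P N : nat) (H : 'M[F2]_(P, N)) (dv : nat)
  (Dchk : {set 'I_P}) (fx : F2 -> F2) (Dmaj : {set 'I_N}) (fm : F2 -> F2)
  (r : 'I_N -> F2) (x : 'rV[F2]_N) : 'rV[F2]_N :=
  \row_v (x 0 v + gate_out Dmaj fm v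
      (maj_dec dv #|[set c : 'I_P | adj H c v && (check_val H Dchk fx x c != 0)]| (r v))).

Definition pbf_noiseless (P N : nat) (H : 'M[F2]_(P, N)) (dv : nat)
  (r : 'I_N -> F2) (x : 'rV[F2]_N) : 'rV[F2]_N :=
  pbf_step H dv set0 id set0 id r x.

Definition hdist (N : nat) (x y : 'rV[F2]_N) : nat := #|[set v : 'I_N | x 0 v != y 0 v]|.

Definition regular_ldpc (P N : nat) (H : 'M[F2]_(P, N)) (dv dc : nat) : Prop :=
  (forall v : 'I_N, #|[set c : 'I_P | adj H c v]| = dv) /\
  (forall c : 'I_P, #|[set v : 'I_N | adj H c v]| = dc).

Definition codeword (P N : nat) (H : 'M[F2]_(P, N)) (c : 'rV[F2]_N) : Prop :=
  c *m H^T = 0.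

Definition generator_of (K P N : nat) (H : 'M[F2]_(P, N)) (G : 'M[F2]_(K, N)) : Prop :=
  row_free G /\ G *m H^T = 0 /\ (forall c : 'rV[F2]_N, codeword H c -> (c <= G)%MS).

Definition systematic (K N : nat) (G : 'M[F2]_(K, N)) : Prop :=
  exists sigma : 'I_K -> 'I_N, injective sigma /\
    forall i j : 'I_K, G i (sigma j) = (i == j)%:R.

(* Condition (A.3), for every outcome of the random tie-breaking bits. *)
Definition cond_A3 (R : realFieldType) (P N : nat) (H : 'M[F2]_(P, N)) (dv : nat)
  (alpha0 theta : R) : Prop :=
  forall c e : 'rV[F2]_N, codeword H c ->
    (#|[set v : 'I_N | e 0 v != 0]|%:R <= alpha0 * N%:R) ->
    forall r : 'I_N -> F2,
      (hdist (pbf_noiseless H dv r (c + e)) c)%:R <= (1 - theta) * alpha0 * N%:R.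

(* Number of stages ceil(L / (d_s - 1)) (d_s >= 2). *)
Definition nstages (L ds : nat) : nat := ((L + ds.-2) %/ ds.-1)%N.

Definition in_stage (L ds l : nat) (i : 'I_L) : bool :=
  (ds.-1 * l <= i < ds.-1 * l.+1)%N.

Definition add_step (L K N : nat) (ds : nat) (A : 'M[F2]_(L, K)) (G : 'M[F2]_(K, N))
  (s : 'rV[F2]_L) (Dand : {set 'I_N}) (fa : F2 -> F2) (Dadd : {set 'I_N}) (fx : F2 -> F2)
  (l : nat) (x : 'rV[F2]_N) : 'rV[F2]_N :=
  \row_j gate_out Dadd fx j
     (x 0 j + \sum_(i : 'I_L | in_stage ds l i) gate_out Dand fa j (s 0 i * (A *m G) i j)).

Fixpoint encodedF_reg (L K P N : nat) (ds dv : nat) (A : 'M[F2]_(L, K)) (G : 'M[F2]_(K, N))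
  (H : 'M[F2]_(P, N)) (s : 'rV[F2]_L)
  (Dand : {set 'I_N}) (fa : F2 -> F2) (Dadd : {set 'I_N}) (Dchk : {set 'I_P})
  (fx : F2 -> F2) (Dmaj : {set 'I_N}) (fm : F2 -> F2) (r : nat -> 'I_N -> F2)
  (n : nat) : 'rV[F2]_N :=
  match n with
  | 0 => 0
  | n'.+1 =>
      pbf_step H dv Dchk fx Dmaj fm (r n')
        (add_step ds A G s Dand fa Dadd fx n'
           (encodedF_reg ds dv A G H s Dand fa Dadd Dchk fx Dmaj fm r n'))
  end.

Definition encodedF_output (L K P N : nat) (ds dv : nat) (A : 'M[F2]_(L, K)) (G : 'M[F2]_(K, N))
  (H : 'M[F2]_(P, N)) (s : 'rV[F2]_L)
  (Dand : {set 'I_N}) (fa : F2 -> F2) (Dadd : {set 'I_N}) (Dchk : {set 'I_P})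
  (fx : F2 -> F2) (Dmaj : {set 'I_N}) (fm : F2 -> F2) (r : nat -> 'I_N -> F2) : 'rV[F2]_N :=
  encodedF_reg ds dv A G H s Dand fa Dadd Dchk fx Dmaj fm r (nstages L ds).

(* Total number of gate activations of ENCODED-F: in stage l, one activation of
   each of the N AND gates per index of the stage, N adder XORs, P check XORs and
   N majority gates. *)
Definition encodedF_activations (L N P ds : nat) : nat :=
  (\sum_(l < nstages L ds) (N * #|[set i : 'I_L | in_stage ds l i]| + N + P + N))%N.

(* Main.v *)
Require Import Defs.
From HB Require Import structures.
From mathcomp Require Import all_boot all_order all_algebra.
From mathcomp Require Import zify ring lra.
Set Implicit Arguments. Unset Strict Implicit. Unset Printing Implicit Defensive.
Import Order.TTheory GRing.Theory Num.Theory.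

Lemma card_pred_sum (I : finType) (P : pred I) :
  #|[set i | P i]| = (\sum_i (P i : nat))%N.
Proof.
rewrite -sum1_card big_mkcond /=; apply: eq_bigr => i _; by rewrite inE; case: (P i).
Qed.
Lemma card_exists_le (I J : finType) (S : {set I}) (rl : I -> J -> bool) k :
  (forall c, #|[set v | rl c v]| = k) ->
  (#|[set v | [exists c in S, rl c v]]| <= k * #|S|)%N.
Proof.
move=> Hk.
have -> : (k * #|S| = \sum_(c in S) #|[set v | rl c v]|)%N.
  rewrite (eq_bigr (fun _ => k)); last by move=> c _; rewrite Hk.
  by rewrite sum_nat_const mulnC.
rewrite card_pred_sum.

rewrite (eq_bigr (fun c => \sum_v (rl c v : nat))%N); last by move=> c _; rewrite card_pred_sum.
rewrite exchange_big /=; apply: leq_sum => v _.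
case: existsP => // -[c /andP[cS rc]].
by rewrite (bigD1 c) //= rc leq_addr.
Qed.

Lemma sum_eq_ord n k : (\sum_(l < n) ((nat_of_ord l == k) : nat) <= 1)%N.
Proof.
elim: n => [|n IH]; first by rewrite big_ord0.
rewrite big_ord_recr /=.
case: (eqVneq n k) => [->|nk]; last by rewrite addn0.
rewrite addn1 ltnS; rewrite big1 // => l _.
have := ltn_ord l; case: eqP => //= ->; by rewrite ltnn.
Qed.
Lemma in_stage_eq L ds l (i : 'I_L) : (2 <= ds)%N ->
  in_stage ds l i = (l == i %/ ds.-1)%N.
Proof.
move=> hds; have d0 : (0 < ds.-1)%N by rewrite -ltnS prednK // ltnW.
rewrite /in_stage eqn_leq leq_divRL // -[(i %/ _ <= l)%N]ltnS ltn_divLR //.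
by rewrite [(l * _)%N]mulnC [(l.+1 * _)%N]mulnC.
Qed.
Lemma activ_bound L N P ds : (2 <= ds)%N ->
  (encodedF_activations L N P ds <= (2 * N + P) * nstages L ds + N * L)%N.
Proof.
move=> hds; rewrite /encodedF_activations.
rewrite (eq_bigr (fun l : 'I_(nstages L ds) => N * #|[set i : 'I_L | in_stage ds l i]| + (2 * N + P)))%N; last first.
  by move=> l _; rewrite mul2n -addnn; ring.
rewrite big_split /= sum_nat_const card_ord [X in (X <= _)%N]addnC.
apply: leq_add; first by rewrite mulnC.
rewrite -big_distrr /= leq_mul2l; apply/orP; right.
rewrite (eq_bigr (fun l : 'I_(nstages L ds) => \sum_(i : 'I_L) (in_stage ds l i : nat))%N); last by move=> l _; rewrite card_pred_sum.
rewrite exchange_big /=.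
rewrite -[X in (_ <= X)%N]card_ord -sum1_card; apply: leq_sum => i _.
rewrite (eq_bigr (fun l : 'I_(nstages L ds) => (nat_of_ord l == i %/ ds.-1 : nat))%N); last by move=> l _; rewrite in_stage_eq.
exact: sum_eq_ord.
Qed.

Local Open Scope ring_scope.

Lemma hdist_tri N (x y z : 'rV[F2]_N) :
  (hdist x z <= hdist y z + #|[set v | x 0%R v != y 0%R v]|)%N.
Proof.
rewrite /hdist; apply: leq_trans (leq_card_setU _ _).
apply: subset_leq_card; apply/subsetP => v; rewrite !inE.
rewrite -negb_and; apply: contra => /andP[/eqP a /eqP b]; by rewrite b a.
Qed.

Lemma add_err (L K N ds : nat) (A : 'M[F2]_(L, K)) (G : 'M[F2]_(K, N)) s Dand fa Dadd fx l
  (x c : 'rV[F2]_N) :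
  (hdist (add_step ds A G s Dand fa Dadd fx l x)
     (\row_j (c 0 j + \sum_(i : 'I_L | in_stage ds l i) s 0 i * (A *m G) i j))%R
   <= hdist x c + #|Dand| + #|Dadd|)%N.
Proof.
set c' := (\row_j _)%R.
have S : [set v | add_step ds A G s Dand fa Dadd fx l x 0 v != c' 0 v] \subset
   ([set v | x 0 v != c 0 v] :|: Dand) :|: Dadd.
  apply/subsetP => v; rewrite !inE !mxE.
  rewrite /gate_out; case: (v \in Dadd); rewrite ?orbT //=.
  case: (v \in Dand); rewrite ?orbT //= !orbF.
  by apply: contraNneq => ->.
rewrite /hdist; apply: leq_trans (subset_leq_card S) _.
apply: leq_trans (leq_of_leqif (leq_card_setU _ _)) _; rewrite leq_add2r.
exact: (leq_of_leqif (leq_card_setU _ _)).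
Qed.

Lemma pbf_err (P N dv dc : nat) (H : 'M[F2]_(P, N)) Dchk fx Dmaj fm r (x c : 'rV[F2]_N) :
  (forall c0 : 'I_P, #|[set v : 'I_N | adj H c0 v]| = dc) ->
  (hdist (pbf_step H dv Dchk fx Dmaj fm r x) c
   <= hdist (pbf_noiseless H dv r x) c + #|Dmaj| + dc * #|Dchk|)%N.
Proof.
move=> Hdc; apply: leq_trans (hdist_tri _ (pbf_noiseless H dv r x) _) _.
rewrite -addnA leq_add2l.
set y := pbf_step _ _ _ _ _ _ _ _; set y0 := pbf_noiseless _ _ _ _.
have S : [set v | y 0 v != y0 0 v] \subset
   Dmaj :|: [set v | [exists c0 in Dchk, adj H c0 v]].
  apply/subsetP => v; rewrite !inE.
  rewrite /y /y0 /pbf_noiseless /pbf_step !mxE /gate_out in_set0.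
  case: (v \in Dmaj) => //=.
  case: existsP => // hn.
  suff -> : [set c0 | adj H c0 v && (check_val H Dchk fx x c0 != 0)] =
            [set c0 | adj H c0 v && (check_val H set0 id x c0 != 0)] by rewrite eqxx.
  apply/setP => c0; rewrite !inE /check_val /gate_out in_set0.
  case a: (adj H c0 v) => //=.
  case d: (c0 \in Dchk) => //; exfalso; apply: hn; exists c0; by rewrite d a.
apply: leq_trans (subset_leq_card S) _.
apply: leq_trans (leq_of_leqif (leq_card_setU _ _)) _; rewrite leq_add2l.
exact: (card_exists_le Dchk Hdc).
Qed.

Definition cst (L K N ds : nat) (A : 'M[F2]_(L, K)) (G : 'M[F2]_(K, N)) (s : 'rV[F2]_L) n
  : 'rV[F2]_N :=
  (\row_(i < L) (if (i < ds.-1 * n)%N then s 0 i else 0)) *m A *m G.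

Lemma cst_step L K N ds (A : 'M[F2]_(L, K)) (G : 'M[F2]_(K, N)) s n :
  cst ds A G s n.+1 =
  \row_j (cst ds A G s n 0 j + \sum_(i : 'I_L | in_stage ds n i) s 0 i * (A *m G) i j).
Proof.
apply/rowP => j; rewrite /cst -!mulmxA !mxE.
rewrite (big_mkcond (fun i : 'I_L => in_stage ds n i)) -big_split /=.
apply: eq_bigr => i _; rewrite !mxE /in_stage.
have mono : (ds.-1 * n <= ds.-1 * n.+1)%N by rewrite leq_mul2l leqnSn orbT.
case: (ltnP i (ds.-1 * n)) => h1; case: (ltnP i (ds.-1 * n.+1)) => h2 /=;
  rewrite ?mul0r ?add0r ?addr0 //.
exfalso; move: (leq_trans h1 mono); by rewrite ltnNge h2.
Qed.

Lemma cst_code L K P N ds (A : 'M[F2]_(L, K)) (G : 'M[F2]_(K, N)) (H : 'M[F2]_(P, N)) s n :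
  G *m H^T = 0 -> codeword H (cst ds A G s n).
Proof. by move=> hG; rewrite /codeword /cst -!mulmxA hG !mulmx0. Qed.

Lemma cst0 L K N ds (A : 'M[F2]_(L, K)) (G : 'M[F2]_(K, N)) s : cst ds A G s 0 = 0.
Proof.
rewrite /cst; have -> : (\row_(i < L) (if (i < ds.-1 * 0)%N then s 0 i else 0)) = 0.
  by apply/rowP => i; rewrite !mxE muln0.
by rewrite !mul0mx.
Qed.

Lemma cst_final L K N ds (A : 'M[F2]_(L, K)) (G : 'M[F2]_(K, N)) s : (2 <= ds)%N ->
  cst ds A G s (nstages L ds) = s *m A *m G.
Proof.
move=> hds; rewrite /cst; congr (_ *m _ *m _); apply/rowP => i; rewrite mxE.
have d0 : (0 < ds.-1)%N by rewrite -ltnS prednK // ltnW.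
suff -> : (i < ds.-1 * nstages L ds)%N by [].
have e := divn_eq (L + ds.-2) ds.-1.
have hr := ltn_pmod (L + ds.-2) d0.
have e2 : (ds.-2 = ds.-1 - 1)%N by lia.
rewrite /nstages; move: e hr; set q := ((L + ds.-2) %/ ds.-1)%N; set r := ((L + ds.-2) %% ds.-1)%N.
move=> e hr; have := ltn_ord i; rewrite mulnC; nia.
Qed.

Unset Implicit Arguments.

Theorem theorem2 (R : realFieldType) (D L K N P ds dv dc : nat)
  (alpha_and alpha_xor alpha_maj alpha0 theta : R)
  (A : 'M['F_2]_(L, K)) (G : 'M['F_2]_(K, N)) (H : 'M['F_2]_(P, N)) :
  (3 < D)%N -> (2 <= ds)%N -> (ds <= D)%N -> (dc <= D)%N ->
  (0 < K)%N -> (K + P = N)%N ->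
  regular_ldpc H dv dc -> generator_of H G -> systematic G ->
  0 < alpha0 < 1 -> 0 < theta < 1 -> cond_A3 H dv alpha0 theta ->
  0 <= alpha_and <= 1 -> 0 <= alpha_xor <= 1 -> 0 <= alpha_maj <= 1 ->
  (ds.-1)%:R * alpha_and
    + ((D%:R * (1 - (N%:R - P%:R) / N%:R) + 1) * alpha_xor) + alpha_maj
    < theta * alpha0 ->
  (* operations per output bit *)
  (encodedF_activations L N P ds)%:R / K%:R
    <= (2 * N + P)%N%:R / K%:R * (nstages L ds)%:R + (N * L)%N%:R / K%:R :> R
  /\
  (* error fraction of the output, for every input, defect placement,
     defect functions and tie-break outcome *)
  (forall (s : 'rV['F_2]_L)
          (Dand : {set 'I_N}) (Dadd : {set 'I_N}) (Dchk : {set 'I_P}) (Dmaj : {set 'I_N})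
          (fa fx fm : 'F_2 -> 'F_2) (r : nat -> 'I_N -> 'F_2),
     valid_defect fa -> valid_defect fx -> valid_defect fm ->
     #|Dand|%:R <= alpha_and * N%:R ->
     #|Dadd|%:R <= alpha_xor * N%:R ->
     #|Dchk|%:R <= alpha_xor * P%:R ->
     #|Dmaj|%:R <= alpha_maj * N%:R ->
     (hdist (encodedF_output ds dv A G H s Dand fa Dadd Dchk fx Dmaj fm r)
            (s *m A *m G))%:R
       <= alpha0 * N%:R).
Proof.
move=> hD hds hdsD hdc hK hKPN [_ Hdc] [_ [hG _]] _ /andP[a0p a01] /andP[thp th1] hA3
  /andP[aa0 aa1] /andP[ax0 ax1] /andP[am0 am1] hmain.
have Kp : (0 : R) < K%:R by rewrite ltr0n.
split.
  rewrite mulrAC -mulrDl; apply: ler_wpM2r; first by rewrite invr_ge0 ltW.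
  rewrite -natrM -natrD ler_nat; exact: activ_bound.
move=> s Dand Dadd Dchk Dmaj fa fx fm r _ _ _ hand hadd hchk hmaj.
have Np : (0 : R) < N%:R by rewrite ltr0n -hKPN; apply: leq_trans hK (leq_addr _ _).
have N0 : N%:R != 0 :> R by rewrite gt_eqF.
have P0 : (0 : R) <= P%:R by [].
have d1 : (1 : R) <= (ds.-1)%:R by rewrite ler1n -ltnS prednK // ltnW.
have dcD : (dc%:R : R) <= D%:R by rewrite ler_nat.
have e : ((ds.-1)%:R * alpha_and
    + ((D%:R * (1 - (N%:R - P%:R) / N%:R) + 1) * alpha_xor) + alpha_maj) * N%:R
   = (ds.-1)%:R * alpha_and * N%:R + D%:R * P%:R * alpha_xor + alpha_xor * N%:R
     + alpha_maj * N%:R :> R by field.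
have key : alpha_and * N%:R + alpha_xor * N%:R + dc%:R * (alpha_xor * P%:R)
    + alpha_maj * N%:R <= theta * alpha0 * N%:R.
  have h1 := ltr_pM2r Np; have := hmain; rewrite -h1 e => hm.
  have p1 : 0 <= ((ds.-1)%:R - 1) * (alpha_and * N%:R).
    by apply: mulr_ge0; [rewrite subr_ge0 | apply: mulr_ge0 => //; apply: ltW].
  have p2 : 0 <= (D%:R - dc%:R) * (alpha_xor * P%:R).
    by apply: mulr_ge0; [rewrite subr_ge0 | apply: mulr_ge0].
  nra.
set B : R := (1 - theta) * alpha0 * N%:R + alpha_maj * N%:R + dc%:R * (alpha_xor * P%:R).
have hchk' : (dc * #|Dchk|)%N%:R <= dc%:R * (alpha_xor * P%:R) :> R.
  by rewrite natrM; apply: ler_wpM2l.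
have inv : forall n, (hdist (encodedF_reg ds dv A G H s Dand fa Dadd Dchk fx Dmaj fm r n)
                            (cst ds A G s n))%:R <= B.
  elim=> [|n IH].
    rewrite /= cst0.
    have -> : hdist (0 : 'rV[F2]_N) 0 = 0%N.
      by apply/eqP; rewrite cards_eq0; apply/eqP/setP => v; rewrite !inE eqxx.
    rewrite /B; apply: addr_ge0; first apply: addr_ge0.
    - apply: mulr_ge0; last exact: ltW.
      apply: mulr_ge0; [by rewrite subr_ge0 ltW | exact: ltW].
    - by apply: mulr_ge0 => //; apply: ltW.
    - by apply: mulr_ge0 => //; apply: mulr_ge0.
  rewrite /= cst_step.
  set x := add_step _ _ _ _ _ _ _ _ _ _.
  set c' := (\row_j _)%R.
  have hc' : codeword H c' by rewrite /c' -cst_step; exact: cst_code.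
  have h1 := @add_err L K N ds A G s Dand fa Dadd fx n (encodedF_reg ds dv A G H s Dand fa Dadd Dchk fx Dmaj fm r n) (cst ds A G s n).
  have h2 := @pbf_err P N dv dc H Dchk fx Dmaj fm (r n) x c' Hdc.
  have hx : (hdist x c')%:R <= alpha0 * N%:R :> R.
    apply: le_trans (_ : B + alpha_and * N%:R + alpha_xor * N%:R <= _).
      apply: le_trans (_ : (hdist (encodedF_reg ds dv A G H s Dand fa Dadd Dchk fx Dmaj fm r n) (cst ds A G s n) + #|Dand| + #|Dadd|)%N%:R <= _).
        by rewrite ler_nat.
      by rewrite !natrD; apply: lerD; first apply: lerD.
    rewrite /B; nra.
  have h3 : (hdist (pbf_noiseless H dv (r n) x) c')%:R <= (1 - theta) * alpha0 * N%:R.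
    have := hA3 c' (x - c') hc'.
    have -> : c' + (x - c') = x by rewrite addrC subrK.
    apply.
    apply: le_trans hx; rewrite ler_nat /hdist; apply: eq_leq; apply: eq_card => v.
    by rewrite !inE !mxE subr_eq0.
  apply: le_trans (_ : (hdist (pbf_noiseless H dv (r n) x) c' + #|Dmaj| + dc * #|Dchk|)%N%:R <= _).
    by rewrite ler_nat.
  rewrite !natrD /B; apply: lerD => //; exact: lerD.
have := inv (nstages L ds); rewrite cst_final // => hf.
rewrite /encodedF_output; apply: le_trans hf _.
rewrite /B; nra.
Qed.
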